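(* Let $R$ be a principal ideal domain, $M$ a faithful primeful $R$-module having at least one prime submodule, $X=\mathrm{Spec}(M)$, $N$ an $R$-module, $K\le M$, and $U=X\setminus V(K)$. Then there exists $a\in R$ such that $\mathcal{A}(N,M)(U)\cong N_a$.
   Context: For a submodule $L$ of an $R$-module $M$, $(L:M)=\{r\in R\mid rM\subseteq L\}$. A submodule $P$ of $M$ is prime if $P\neq M$ and whenever $rm\in P$ ($r\in R$, $m\in M$) then $r\in (P:M)$ or $m\in P$. $\mathrm{Spec}(M)$ is the set of prime submodules. $M$ is faithful if $\mathrm{Ann}_R(M)=0$; primeful if $M=0$ or $\mathrm{Spec}(M)\to\mathrm{Spec}(R/\mathrm{Ann}(M))$, $P\mapsto(P:M)/\mathrm{Ann}(M)$, is surjective. For $L\le M$, $V(L)=\{P\in X\mid (P:M)\supseteq (L:M)\}$; these are the closed sets of the Zariski topology. For open $U\subseteq X$, $\mathrm{Supp}(U)=\{(P:M)\mid P\in U\}$. $\mathcal{A}(N,M)(U)$ is the $R$-module of families $(\gamma_{\mathfrak p})_{\mathfrak p\in\mathrm{Supp}(U)}\in\prod_{\mathfrak p\in\mathrm{Supp}(U)}N_{\mathfrak p}$ such that for each $Q\in U$ there exist an open neighbourhood $W\subseteq U$ of $Q$ and $s\in R$, $m\in N$ with $s\notin(P:M)$ and $\gamma_{(P:M)}=m/s$ for every $P\in W$. $N_a$ denotes the localization of $N$ at the multiplicative set $\{a^n\mid n\ge0\}$. *)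

(* Defs.v *)
From HB Require Import structures.
From mathcomp Require Import all_boot all_order all_algebra.
Set Implicit Arguments. Unset Strict Implicit. Unset Printing Implicit Defensive.
Import GRing.Theory.
Local Open Scope ring_scope.

Section Defs.
Variable R : idomainType.

Definition is_ideal (I : R -> Prop) : Prop :=
  I 0 /\ (forall x y, I x -> I y -> I (x + y)) /\ (forall r x, I x -> I (r * x)).

Definition prime_ideal (p : R -> Prop) : Prop :=
  is_ideal p /\ ~ p 1 /\ (forall a b, p (a * b) -> p a \/ p b).

Definition PID : Prop :=
  forall I, is_ideal I -> exists a, forall x, I x <-> exists r, x = r * a.

Variable M : lmodType R.

Definition is_submodule (L : M -> Prop) : Prop :=
  L 0 /\ (forall x y, L x -> L y -> L (x + y)) /\ (forall r x, L x -> L (r *: x)).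

Definition colon (L : M -> Prop) : R -> Prop := fun r => forall m, L (r *: m).

Definition prime_submodule (P : M -> Prop) : Prop :=
  is_submodule P /\ (exists m, ~ P m) /\
  (forall r m, P (r *: m) -> colon P r \/ P m).

Definition Ann : R -> Prop := fun r => forall m : M, r *: m = 0.

Definition faithful : Prop := forall r, Ann r -> r = 0.

(** primeful: M = 0, or P |-> (P:M)/Ann(M) is onto Spec(R/Ann(M)).
    Prime ideals of R/Ann(M) are written out as the prime ideals p of R
    containing Ann(M) (via p |-> p/Ann(M)); (P:M)/Ann(M) = p/Ann(M) iff
    (P:M) = p since (P:M) ⊇ Ann(M). *)
Definition primeful : Prop :=
  (forall m : M, m = 0) \/
  (forall p, prime_ideal p -> (forall r, Ann r -> p r) ->
     exists P, prime_submodule P /\ colon P = p).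

Definition V (L : M -> Prop) : (M -> Prop) -> Prop :=
  fun P => prime_submodule P /\ (forall r, colon L r -> colon P r).

Definition zopen (W : (M -> Prop) -> Prop) : Prop :=
  exists L, is_submodule L /\
    forall P, W P <-> (prime_submodule P /\ ~ V L P).

Definition Supp (U : (M -> Prop) -> Prop) : (R -> Prop) -> Prop :=
  fun p => exists P, U P /\ colon P = p.

Variable N : lmodType R.

(** Localisation S^{-1} N at a multiplicative set S ⊆ R.
    An element of S^{-1}N is an equivalence class of pairs (m, s), s in S,
    represented as the set of its representatives. *)
Definition loc_equiv (S : R -> Prop) (x y : N * R) : Prop :=
  exists t, S t /\ t *: (y.2 *: x.1 - x.2 *: y.1) = 0.

Definition frac (S : R -> Prop) (m : N) (s : R) : N * R -> Prop :=
  fun x => S x.2 /\ loc_equiv S x (m, s).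

Definition is_loc_elem (S : R -> Prop) (C : N * R -> Prop) : Prop :=
  exists m s, S s /\ C = frac S m s.

Definition loc_add (S : R -> Prop) (C1 C2 : N * R -> Prop) : N * R -> Prop :=
  fun x => exists m1 s1 m2 s2, C1 (m1, s1) /\ C2 (m2, s2) /\
             frac S (s2 *: m1 + s1 *: m2) (s1 * s2) x.

Definition loc_scale (S : R -> Prop) (r : R) (C : N * R -> Prop) : N * R -> Prop :=
  fun x => exists m s, C (m, s) /\ frac S (r *: m) s x.

Definition compl (p : R -> Prop) : R -> Prop := fun r => ~ p r.
Definition powers (a : R) : R -> Prop := fun r => exists n : nat, r = a ^+ n.

(** Families (gamma_p)_{p in Supp U} in prod_{p in Supp U} N_p, encoded as
    functions on ideals, taking the value "empty" outside Supp U. *)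
Definition family := (R -> Prop) -> (N * R -> Prop).

Definition in_product (U : (M -> Prop) -> Prop) (g : family) : Prop :=
  forall p, (Supp U p -> is_loc_elem (compl p) (g p)) /\
            (~ Supp U p -> g p = (fun _ => False)).

Definition A_sections (U : (M -> Prop) -> Prop) (g : family) : Prop :=
  in_product U g /\
  forall Q, U Q -> exists W, zopen W /\ W Q /\ (forall P, W P -> U P) /\
    exists (s : R) (m : N), forall P, W P ->
      ~ colon P s /\ g (colon P) = frac (compl (colon P)) m s.

Definition fam_add (g1 g2 : family) : family :=
  fun p => loc_add (compl p) (g1 p) (g2 p).
Definition fam_scale (r : R) (g : family) : family :=
  fun p => loc_scale (compl p) r (g p).

Definition A_iso_loc (U : (M -> Prop) -> Prop) (a : R) : Prop :=
  exists phi : family -> (N * R -> Prop),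
    (forall g, A_sections U g -> is_loc_elem (powers a) (phi g)) /\
    (forall g1 g2, A_sections U g1 -> A_sections U g2 -> phi g1 = phi g2 -> g1 = g2) /\
    (forall C, is_loc_elem (powers a) C -> exists g, A_sections U g /\ phi g = C) /\
    (forall g1 g2, A_sections U g1 -> A_sections U g2 ->
        phi (fam_add g1 g2) = loc_add (powers a) (phi g1) (phi g2)) /\
    (forall r g, A_sections U g -> phi (fam_scale r g) = loc_scale (powers a) r (phi g)).

End Defs.

(* Main.v *)
From Pilot Require Import Defs.
From mathcomp Require Import all_boot all_order all_algebra.
From mathcomp Require Import ring.
Import Pilot.Defs.
From Stdlib Require Import ClassicalEpsilon Classical FunctionalExtensionality PropExtensionality.
Set Implicit Arguments. Unset Strict Implicit. Unset Printing Implicit Defensive.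
Import GRing.Theory.
Local Open Scope ring_scope.

Section Loc.
Variables (R : idomainType) (N : lmodType R).
Definition mult (S : R -> Prop) := S 1 /\ forall x y, S x -> S y -> S (x * y).

Lemma equivE (S : R -> Prop) (x y : N * R) :
  loc_equiv S x y <-> exists t, S t /\ (t * y.2) *: x.1 = (t * x.2) *: y.1.
Proof.
rewrite /loc_equiv; split=> -[t [St H]]; exists t; split=> //.
- by apply/eqP; rewrite -subr_eq0 -!scalerA -scalerBr H.
- by apply/eqP; rewrite scalerBr !scalerA subr_eq0 H.
Qed.

Lemma scaleE (a b : R) (v : N) : a = b -> a *: v = b *: v.
Proof. by move->. Qed.

Variable S : R -> Prop.
Hypothesis mS : mult S.

Lemma equiv_refl (x : N * R) : loc_equiv S x x.
Proof. apply/equivE; exists 1; split; first exact: mS.1. by rewrite mulrC. Qed.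

Lemma equiv_sym (x y : N * R) : loc_equiv S x y -> loc_equiv S y x.
Proof. by move/equivE=> [t [St H]]; apply/equivE; exists t. Qed.

Lemma equiv_trans (x y z : N * R) : S y.2 ->
  loc_equiv S x y -> loc_equiv S y z -> loc_equiv S x z.
Proof.
move=> Sy /equivE [t1 [S1 H1]] /equivE [t2 [S2 H2]]; apply/equivE.
exists (t1 * t2 * y.2); split; first by apply: mS.2 => //; apply: mS.2.
transitivity ((t2 * z.2) *: ((t1 * y.2) *: x.1)).
  by rewrite scalerA; apply: scaleE; ring.
rewrite H1 scalerA.
transitivity ((t1 * x.2) *: ((t2 * z.2) *: y.1)).
  by rewrite scalerA; apply: scaleE; ring.
rewrite H2 scalerA; apply: scaleE; ring.
Qed.

Lemma frac_mem (m : N) s : S s -> frac S m s (m, s).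
Proof. by move=> Ss; split=> //; apply: equiv_refl. Qed.

Lemma frac_eq (m : N) s m' s' : S s -> S s' ->
  loc_equiv S (m, s) (m', s') -> frac S m s = frac S m' s'.
Proof.
move=> Ss Ss' E; apply: functional_extensionality => x.
apply: propositional_extensionality; split=> -[Sx Ex]; split=> //.
- exact: (equiv_trans (y:=(m,s)) Ss Ex E).
- exact: (equiv_trans (y:=(m',s')) Ss' Ex (equiv_sym E)).
Qed.

Lemma frac_inv (m : N) s m' s' : S s ->
  frac S m s = frac S m' s' -> loc_equiv S (m, s) (m', s').
Proof. by move=> Ss H; have := frac_mem m Ss; rewrite H => -[]. Qed.

Lemma frac_rep (m : N) s x : S s -> frac S m s x -> frac S m s = frac S x.1 x.2.
Proof.
case: x => m' s' Ss [/= Ss' E]; apply: frac_eq => //; exact: equiv_sym.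
Qed.

Lemma add_equiv (m1 m2 m1' m2' : N) s1 s2 s1' s2' :
  loc_equiv S (m1', s1') (m1, s1) -> loc_equiv S (m2', s2') (m2, s2) ->
  loc_equiv S (s2' *: m1' + s1' *: m2', s1' * s2') (s2 *: m1 + s1 *: m2, s1 * s2).
Proof.
move=> /equivE [t1 [S1 /= H1]] /equivE [t2 [S2 /= H2]]; apply/equivE.
exists (t1 * t2); split; first exact: mS.2.
rewrite /= !scalerDr !scalerA.
have -> : (t1 * t2 * (s1 * s2) * s2') *: m1' = (t2 * s2 * s2') *: ((t1 * s1) *: m1').
  by rewrite scalerA; apply: scaleE; ring.
have -> : (t1 * t2 * (s1 * s2) * s1') *: m2' = (t1 * s1 * s1') *: ((t2 * s2) *: m2').
  by rewrite scalerA; apply: scaleE; ring.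
rewrite H1 H2 !scalerA; congr (_ + _); apply: scaleE; ring.
Qed.

Lemma scale_equiv (r : R) (m m' : N) s s' :
  loc_equiv S (m', s') (m, s) -> loc_equiv S (r *: m', s') (r *: m, s).
Proof.
move=> /equivE [t [St /= H]]; apply/equivE; exists t; split=> //=.
transitivity (r *: ((t * s) *: m')); first by rewrite !scalerA; apply: scaleE; ring.
by rewrite H !scalerA; apply: scaleE; ring.
Qed.

Lemma loc_add_frac (m1 m2 : N) s1 s2 : S s1 -> S s2 ->
  loc_add S (frac S m1 s1) (frac S m2 s2) = frac S (s2 *: m1 + s1 *: m2) (s1 * s2).
Proof.
move=> S1 S2; apply: functional_extensionality => x.
apply: propositional_extensionality; split.
- move=> [m1' [s1' [m2' [s2' [[/= S1' E1] [[/= S2' E2] Fx]]]]]].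
  have Sp := mS.2 _ _ S1' S2'; have Sq := mS.2 _ _ S1 S2.
  by rewrite (frac_eq Sp Sq (add_equiv E1 E2)) in Fx.
- move=> Fx; exists m1, s1, m2, s2; split; first exact: frac_mem.
  by split; first exact: frac_mem.
Qed.

Lemma loc_scale_frac r (m : N) s : S s ->
  loc_scale S r (frac S m s) = frac S (r *: m) s.
Proof.
move=> Ss; apply: functional_extensionality => x.
apply: propositional_extensionality; split.
- move=> [m' [s' [[/= Ss' E] Fx]]].
  by rewrite (frac_eq _ _ (scale_equiv r E)) in Fx.
- by move=> Fx; exists m, s; split; first exact: frac_mem.
Qed.

End Loc.

Definition img (R : idomainType) (N : lmodType R) (T : R -> Prop) (C : N * R -> Prop) :=
  fun x => exists m s, C (m, s) /\ frac T m s x.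

Lemma equiv_sub (R : idomainType) (N : lmodType R) (S T : R -> Prop) (x y : N * R) :
  (forall r, S r -> T r) -> loc_equiv S x y -> loc_equiv T x y.
Proof. by move=> ST [t [St H]]; exists t; split=> //; apply: ST. Qed.

Lemma img_frac (R : idomainType) (N : lmodType R) (S T : R -> Prop) (m : N) s :
  mult S -> mult T -> (forall r, S r -> T r) -> S s ->
  img T (frac S m s) = frac T m s.
Proof.
move=> mS mT ST Ss; apply: functional_extensionality => x.
apply: propositional_extensionality; split.
- move=> [m' [s' [[/= Ss' E] Fx]]].
  by rewrite (frac_eq mT (ST _ Ss') (ST _ Ss) (equiv_sub ST E)) in Fx.
- by move=> Fx; exists m, s; split; first exact: frac_mem.
Qed.

Section RingPart.
Variable R : idomainType.
Hypothesis pid : PID R.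

Lemma ideal0 (I : R -> Prop) : is_ideal I -> I 0.
Proof. by case. Qed.
Lemma idealD (I : R -> Prop) x y : is_ideal I -> I x -> I y -> I (x + y).
Proof. by move=> [_ [h _]]; apply: h. Qed.
Lemma idealM (I : R -> Prop) r x : is_ideal I -> I x -> I (r * x).
Proof. by move=> [_ [_ h]]; apply: h. Qed.
Lemma idealMr (I : R -> Prop) r x : is_ideal I -> I x -> I (x * r).
Proof. by move=> hI Ix; rewrite mulrC; apply: idealM. Qed.

Lemma prime_pow (p : R -> Prop) e n : prime_ideal p -> ~ p e -> ~ p (e ^+ n).
Proof.
move=> [hI [n1 pr]] ne; elim: n => [|n IH]; first by rewrite expr0.
by rewrite exprS => /pr [].
Qed.

Lemma mult_compl (p : R -> Prop) : prime_ideal p -> mult (compl p).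
Proof. by move=> [hI [n1 pr]]; split=> // x y nx ny /pr []. Qed.

Lemma mult_powers (a : R) : mult (powers a).
Proof.
split; first by exists 0%N; rewrite expr0.
by move=> x y [i ->] [j ->]; exists (i + j)%N; rewrite exprD.
Qed.

Lemma powers_compl (p : R -> Prop) b r : prime_ideal p -> ~ p b -> powers b r -> compl p r.
Proof. by move=> pp nb [n ->]; apply: prime_pow. Qed.

Lemma rad_lemma (I : R -> Prop) (e : R) : is_ideal I ->
  (forall p, prime_ideal p -> (forall x, I x -> p x) -> p e) -> exists n, I (e ^+ n).
Proof.
move=> hI hP; apply: NNPP => hn.
have hn' : forall n, ~ I (e ^+ n) by move=> n H; apply: hn; exists n.
pose Good (J : R -> Prop) := is_ideal J /\ (forall x, I x -> J x) /\ (forall n, ~ J (e ^+ n)).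
have [J [[hJ [IJ nJ]] maxJ]] : exists J, Good J /\ forall J', Good J' ->
    (forall x, J x -> J' x) -> forall x, J' x -> J x.
  apply: NNPP => H.
  have step : forall J, Good J -> exists J', Good J' /\ (forall x, J x -> J' x) /\
      exists x, J' x /\ ~ J x.
    move=> J GJ; apply: NNPP => H2; apply: H; exists J; split=> // J' GJ' JJ' x J'x.
    apply: NNPP => nJx; apply: H2; exists J'; split=> //; split=> //; exists x; by split.
  pose F (J : R -> Prop) := epsilon (inhabits I) (fun J' => Good J' /\ (forall x, J x -> J' x) /\
      exists x, J' x /\ ~ J x).
  pose ch := fix ch (n : nat) : R -> Prop := if n is k.+1 then F (ch k) else I.
  have Gch : forall n, Good (ch n) /\ (forall x, ch n x -> ch n.+1 x) /\
      exists x, ch n.+1 x /\ ~ ch n x.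
    elim=> [|n [Gn _]].
      have GI : Good I by split=> //; split.
      by split=> //; have [_ ?] := epsilon_spec (inhabits I) _ (step I GI).
    have [Gn1 _] := epsilon_spec (inhabits I) _ (step _ Gn).
    by split=> //; have [_ ?] := epsilon_spec (inhabits I) _ (step _ Gn1).
  have mono : forall n m x, (n <= m)%N -> ch n x -> ch m x.
    move=> n m x; elim: m => [|m IH]; first by rewrite leqn0 => /eqP ->.
    rewrite leq_eqVlt => /orP [/eqP -> //|]; rewrite ltnS => /IH H1 /H1.
    exact: (Gch m).2.1.
  pose Uu x := exists n, ch n x.
  have hU : is_ideal Uu.
    split; first by exists 0%N; apply: ideal0.
    split.
      move=> x y [i xi] [j yj]; exists (maxn i j).
      apply: idealD; first exact: (Gch (maxn i j)).1.1.
        by apply: mono xi; apply: leq_maxl.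
      by apply: mono yj; apply: leq_maxr.
    move=> r x [i xi]; exists i; apply: idealM => //; exact: (Gch i).1.1.
  have [d hd] := pid hU.
  have [k dk] : Uu d by apply/hd; exists 1; rewrite mul1r.
  have [x [xk1 nxk]] := (Gch k).2.2.
  have : Uu x by exists k.+1.
  move/hd => [r xE]; rewrite xE in nxk; apply: nxk; apply: idealM => //; exact: (Gch k).1.1.
have gen : forall x, ~ J x -> exists n j r, J j /\ e ^+ n = j + r * x.
  move=> x nx; apply: NNPP => H; apply: nx.
  pose Jx z := exists j r, J j /\ z = j + r * x.
  apply: (maxJ Jx); last by exists 0, 1; split; [apply: ideal0|rewrite add0r mul1r].
    split; last split.
    - split; first by exists 0, 0; split; [apply: ideal0|rewrite mul0r addr0].
      split.
        move=> y z [j1 [r1 [J1 ->]]] [j2 [r2 [J2 ->]]]; exists (j1 + j2), (r1 + r2).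
        by split; [apply: idealD|rewrite mulrDl; ring].
      move=> c y [j1 [r1 [J1 ->]]]; exists (c * j1), (c * r1).
      by split; [apply: idealM|ring].
    - by move=> y Iy; exists y, 0; split; [apply: IJ|rewrite mul0r addr0].
    - by move=> n [j [r [Jj En]]]; apply: H; exists n, j, r.
  by move=> y Jy; exists y, 0; split=> //; rewrite mul0r addr0.
have pJ : prime_ideal J.
  split=> //; split; first by have := nJ 0%N; rewrite expr0.
  move=> a b Jab; apply: NNPP => H.
  have na : ~ J a by move=> Ja; apply: H; left.
  have nb : ~ J b by move=> Jb; apply: H; right.
  have [n [j1 [r [J1 E1]]]] := gen a na.
  have [k [j2 [s [J2 E2]]]] := gen b nb.
  apply: (nJ (n + k)%N); rewrite exprD E1 E2.
  have -> : (j1 + r * a) * (j2 + s * b) = (j2 + s * b) * j1 + (r * a) * j2 + (r * s) * (a * b).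
    by ring.
  by apply: idealD => //; [apply: idealD => //; apply: idealM|apply: idealM].
by apply: (nJ 1%N); rewrite expr1; apply: hP.
Qed.

End RingPart.

Fixpoint inl (T : Type) (z : T) (l : seq T) : Prop :=
  if l is y :: l' then z = y \/ inl z l' else False.

Lemma uniform1 (T : Type) (Q : T -> nat -> Prop) (l : seq T) :
  (forall x k k', Q x k -> (k <= k')%N -> Q x k') ->
  (forall x, inl x l -> exists k, Q x k) -> exists K, forall x, inl x l -> Q x K.
Proof.
move=> mono; elim: l => [|y l IH] H; first by exists 0%N.
have [k Qk] := H y (or_introl erefl).
have [K QK] := IH (fun x hx => H x (or_intror hx)).
exists (maxn k K) => x [->|hx]; first exact: mono Qk (leq_maxl _ _).
exact: mono (QK x hx) (leq_maxr _ _).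
Qed.

Lemma uniform2 (T : Type) (P : T -> T -> nat -> Prop) (l : seq T) :
  (forall x y k k', P x y k -> (k <= k')%N -> P x y k') ->
  (forall x y, inl x l -> inl y l -> exists k, P x y k) ->
  exists K, forall x y, inl x l -> inl y l -> P x y K.
Proof.
move=> mono H.
have [K HK] := @uniform1 T (fun x k => forall y, inl y l -> P x y k) l
  (fun x k k' H1 le y hy => mono _ _ _ _ (H1 y hy) le)
  (fun x hx => @uniform1 T (fun y k => P x y k) l (fun y => mono x y) (fun y hy => H x y hx hy)).
by exists K => x y hx hy; apply: HK.
Qed.

Section RingPart2.
Variable R : idomainType.
Hypothesis pid : PID R.

Lemma loc_zero (N : lmodType R) e (x : N) :
  (forall p, prime_ideal p -> ~ p e -> exists t, ~ p t /\ t *: x = 0) ->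
  exists n, e ^+ n *: x = 0.
Proof.
move=> H.
have hI : is_ideal (fun r : R => r *: x = 0).
  split; first by rewrite scale0r.
  split; first by move=> a c ha hc; rewrite scalerDl ha hc addr0.
  by move=> r a ha; rewrite -scalerA ha scaler0.
apply: (rad_lemma pid hI) => p pp sub; apply: NNPP => ne.
by have [t [nt ht]] := H p pp ne; apply: nt; apply: sub.
Qed.

Definition gen (Pt : (R -> Prop) -> Prop) (F : (R -> Prop) -> R) (x : R) : Prop :=
  exists l : seq (R * (R -> Prop)), (forall z, inl z l -> Pt z.2) /\
    x = \sum_(z <- l) z.1 * F z.2.

Lemma inl_cat (T : Type) (z : T) l1 l2 : inl z (l1 ++ l2) -> inl z l1 \/ inl z l2.
Proof. elim: l1 => [|y l IH] /=; first by right. by case=> [->|/IH [h|h]]; auto. Qed.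

Lemma inl_map (T U : Type) (f : T -> U) (z : U) l : inl z (map f l) -> exists y, inl y l /\ z = f y.
Proof.
elim: l => [|y l IH] //= [->|/IH [w [h ->]]]; first by exists y; split=> //; left.
by exists w; split=> //; right.
Qed.

Lemma gen_ideal Pt F : is_ideal (gen Pt F).
Proof.
split; first by exists [::]; split=> //; rewrite big_nil.
split.
  move=> x y [l1 [h1 ->]] [l2 [h2 ->]]; exists (l1 ++ l2); split; last by rewrite big_cat.
  by move=> z hz; case: (inl_cat hz) => [/h1|/h2].
move=> r x [l [h ->]]; exists (map (fun z => (r * z.1, z.2)) l); split.
  move=> z hz; case: (inl_map hz) => [y [hy E]]; rewrite E /=; exact: h.
by rewrite big_map mulr_sumr; apply: eq_bigr => z _; rewrite mulrA.
Qed.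

Lemma gen_mem Pt F p : Pt p -> gen Pt F (F p).
Proof.
move=> hp; exists [:: (1, p)]; split; last by rewrite big_seq1 mul1r.
by move=> z /= [-> //|].
Qed.

Lemma sum_in (J : R -> Prop) F (l : seq (R * (R -> Prop))) : is_ideal J ->
  (forall z, inl z l -> J (F z.2)) -> J (\sum_(z <- l) z.1 * F z.2).
Proof.
move=> hJ; elim: l => [|y l IH] H; first by rewrite big_nil; apply: ideal0.
rewrite big_cons; apply: idealD => //; first by apply: (idealM _ hJ); apply: H; left.
by apply: IH => z hz; apply: H; right.
Qed.

Lemma sum_notin (q : R -> Prop) F (l : seq (R * (R -> Prop))) : prime_ideal q ->
  ~ q (\sum_(z <- l) z.1 * F z.2) -> exists z, inl z l /\ ~ q (F z.2).
Proof.
move=> [hq _] H; apply: NNPP => H2; apply: H; apply: (@sum_in q F l hq) => z hz.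
by apply: NNPP => nz; apply: H2; exists z.
Qed.

End RingPart2.

Section Main.
Variables (R : idomainType) (M N : lmodType R) (K : M -> Prop).
Hypotheses (pid : PID R) (faith : faithful M) (prf : primeful M) (hK : is_submodule K).
Variable b : R.
Hypothesis hb : forall r, colon K r <-> exists c, r = c * b.

Definition U := fun P : M -> Prop => prime_submodule P /\ ~ V K P.

Lemma colon_ideal (L : M -> Prop) : is_submodule L -> is_ideal (colon L).
Proof.
move=> [L0 [LD LZ]]; split; first by move=> m; rewrite scale0r.
split; first by move=> x y hx hy m; rewrite scalerDl; apply: LD.
by move=> r x hx m; rewrite -scalerA; apply: LZ.
Qed.

Lemma colon_prime (P : M -> Prop) : prime_submodule P -> prime_ideal (colon P).
Proof.
move=> [hP [[m0 nm0] pr]]; split; first exact: colon_ideal.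
split; first by move=> h; apply: nm0; have := h m0; rewrite scale1r.
move=> x y hxy; case: (classic (colon P y)) => hy; first by right.
left; have [m1 nm1] : exists m, ~ P (y *: m).
  by apply: NNPP => H; apply: hy => m; apply: NNPP => H2; apply: H; exists m.
by case: (pr x (y *: m1)) => //; rewrite scalerA; apply: hxy.
Qed.

Lemma notV (L : M -> Prop) c P : is_submodule L ->
  (forall r, colon L r <-> exists c', r = c' * c) -> prime_submodule P ->
  (V L P <-> colon P c).
Proof.
move=> hL hc hP; split.
  by move=> [_ H]; apply: H; apply/hc; exists 1; rewrite mul1r.
move=> Pc; split=> // r /hc [c' ->].
exact: (idealM _ (colon_ideal hP.1) Pc).
Qed.

Lemma U_iff P : U P <-> prime_submodule P /\ ~ colon P b.
Proof.
split=> -[hP H]; split=> //.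
  by move=> Pb; apply: H; apply/(notV hK hb hP).
by move/(notV hK hb hP).
Qed.

Lemma exP (p : R -> Prop) : prime_ideal p -> exists P : M -> Prop, prime_submodule P /\ colon P = p.
Proof.
move=> pp; case: prf => [H0|H]; last first.
  apply: H => // r hr; rewrite (faith hr); exact: (ideal0 pp.1).
have : (1 : R) = 0 by apply: faith => m; exact: H0.
by move/eqP; rewrite oner_eq0.
Qed.

Lemma Supp_iff p : Supp U p <-> prime_ideal p /\ ~ p b.
Proof.
split.
  move=> [P [/U_iff [hP nb] <-]]; split=> //; exact: colon_prime.
move=> [pp nb]; have [P [hP E]] := exP pp; exists P; split=> //.
by apply/U_iff; split=> //; rewrite E.
Qed.

Definition psi (C : N * R -> Prop) : (R -> Prop) -> (N * R -> Prop) :=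
  fun p x => (prime_ideal p /\ ~ p b) /\ img (compl p) C x.

Lemma psi_pt C p : prime_ideal p -> ~ p b -> psi C p = img (compl p) C.
Proof.
move=> pp nb; apply: functional_extensionality => x; apply: propositional_extensionality.
by split=> [[]|] //.
Qed.

Lemma psi_npt C p : ~ (prime_ideal p /\ ~ p b) -> psi C p = fun _ => False.
Proof.
move=> H; apply: functional_extensionality => x; apply: propositional_extensionality.
by split=> [[]|].
Qed.

Lemma psi_frac (m : N) n p : prime_ideal p -> ~ p b ->
  psi (frac (powers b) m (b ^+ n)) p = frac (compl p) m (b ^+ n).
Proof.
move=> pp nb; rewrite psi_pt //; apply: img_frac.
- exact: mult_powers.
- exact: mult_compl.
- by move=> r; apply: powers_compl.
- by exists n.
Qed.


Lemma psi_sec (C : N * R -> Prop) : is_loc_elem (powers b) C -> A_sections U (psi C).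
Proof.
move=> [m [s [[n ->] ->]]]; split.
  move=> p; split.
    move/Supp_iff => [pp nb]; rewrite psi_frac //; exists m, (b ^+ n); split=> //.
    exact: (prime_pow pp nb).
  move=> nS; apply: psi_npt => H; apply: nS; exact/Supp_iff.
move=> Q UQ; exists U; split; first by exists K; split.
split=> //; split=> //.
exists (b ^+ n), m => P /U_iff [hP nb].
have pp := colon_prime hP.
split; first exact: (prime_pow pp nb).
by rewrite psi_frac.
Qed.

Lemma psi_inj (C1 C2 : N * R -> Prop) : is_loc_elem (powers b) C1 -> is_loc_elem (powers b) C2 ->
  psi C1 = psi C2 -> C1 = C2.
Proof.
move=> [m1 [s1 [[n1 ->] ->]]] [m2 [s2 [[n2 ->] ->]]] E.
apply: frac_eq; [exact: mult_powers| by exists n1| by exists n2|].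
have [k hk] : exists k, b ^+ k *: (b ^+ n2 *: m1 - b ^+ n1 *: m2) = 0.
  apply: (loc_zero pid) => p pp nb.
  have := f_equal (fun g => g p) E; rewrite /= !psi_frac // => E'.
  have [t [nt ht]] := frac_inv (mult_compl pp) (prime_pow (n:=n1) pp nb) E'.
  by exists t.
by exists (b ^+ k); split; [exists k|].
Qed.

Lemma psi_add (C1 C2 : N * R -> Prop) : is_loc_elem (powers b) C1 -> is_loc_elem (powers b) C2 ->
  is_loc_elem (powers b) (loc_add (powers b) C1 C2) /\ psi (loc_add (powers b) C1 C2) = fam_add (psi C1) (psi C2).
Proof.
move=> [m1 [s1 [[n1 ->] ->]]] [m2 [s2 [[n2 ->] ->]]].
rewrite loc_add_frac; [|exact: mult_powers|by exists n1|by exists n2].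
rewrite -exprD; split.
  by exists (b ^+ n2 *: m1 + b ^+ n1 *: m2), (b ^+ (n1 + n2)); split=> //; exists (n1 + n2)%N.
apply: functional_extensionality => p; rewrite /fam_add.
case: (classic (prime_ideal p /\ ~ p b)) => [[pp nb]|H].
  rewrite !(psi_frac _ _ pp nb) (loc_add_frac (mult_compl pp) _ _ (prime_pow pp nb) (prime_pow pp nb)).
  by rewrite exprD.
rewrite !psi_npt //; apply: functional_extensionality => x; apply: propositional_extensionality.
by split=> // -[? [? [? [? [[] _]]]]].
Qed.

Lemma psi_scale r (C : N * R -> Prop) : is_loc_elem (powers b) C ->
  is_loc_elem (powers b) (loc_scale (powers b) r C) /\ psi (loc_scale (powers b) r C) = fam_scale r (psi C).
Proof.
move=> [m [s [[n ->] ->]]].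
rewrite loc_scale_frac; [|exact: mult_powers|by exists n].
split; first by exists (r *: m), (b ^+ n); split=> //; exists n.
apply: functional_extensionality => p; rewrite /fam_scale.
case: (classic (prime_ideal p /\ ~ p b)) => [[pp nb]|H].
  by rewrite !(psi_frac _ _ pp nb) (loc_scale_frac (mult_compl pp) _ _ (prime_pow pp nb)).
rewrite !psi_npt //; apply: functional_extensionality => x; apply: propositional_extensionality.
by split=> // -[? [? [[] _]]].
Qed.


Lemma sec_local (g : (R -> Prop) -> (N * R -> Prop)) : A_sections U g ->
  forall p, prime_ideal p -> ~ p b ->
  exists c s (m : N), ~ p c /\ forall q, prime_ideal q -> ~ q c ->
     ~ q b /\ ~ q s /\ g q = frac (compl q) m s.
Proof.
move=> [_ hloc] p pp nb.
have [P [hP E]] := exP pp.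
have UP : U P by apply/U_iff; split=> //; rewrite E.
have [W [[L [hL hW]] [WP [WU [s [m hsm]]]]]] := hloc P UP.
have [c hc] := pid (colon_ideal hL).
exists c, s, m; split.
  move: WP => /hW [_ nV]; rewrite -E => Pc; apply: nV; exact/(notV hL hc hP).
move=> q qq nc.
have [Q [hQ EQ]] := exP qq.
have WQ : W Q by apply/hW; split=> //; move/(notV hL hc hQ); rewrite EQ; exact: nc.
have [_ nQb] := (U_iff Q).1 (WU Q WQ).
have [ns Hg] := hsm Q WQ.
by rewrite -EQ; split.
Qed.

Lemma datum (g : (R -> Prop) -> (N * R -> Prop)) : A_sections U g ->
  forall p, prime_ideal p -> ~ p b ->
  exists fa : R * N, ~ p fa.1 /\ forall q, prime_ideal q -> ~ q fa.1 ->
     ~ q b /\ g q = frac (compl q) fa.2 fa.1.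
Proof.
move=> hg p pp nb.
have [c [s [m [nc H]]]] := sec_local hg pp nb.
have hs : is_ideal (fun x => exists r, x = r * s).
  split; first by exists 0; rewrite mul0r.
  split; first by move=> x y [r1 ->] [r2 ->]; exists (r1 + r2); rewrite mulrDl.
  by move=> r x [r1 ->]; exists (r * r1); rewrite mulrA.
have [n [r Er]] : exists n, exists r, c ^+ n = r * s.
  apply: (rad_lemma pid hs) => q qq sub; apply: NNPP => nqc.
  by have [_ [nqs _]] := H q qq nqc; apply: nqs; apply: sub; exists 1; rewrite mul1r.
exists (c ^+ n.+1, (r * c) *: m); split; first exact: (prime_pow pp nc).
move=> q qq /= nf.
have nqc : ~ q c by move=> qc; apply: nf; rewrite exprSr; exact: (idealM _ qq.1 qc).
have [nqb [nqs Hg]] := H q qq nqc.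
split=> //; rewrite Hg; apply: (frac_eq (mult_compl qq) nqs nf).
apply/equivE; exists 1; split; first exact: qq.2.1.
by rewrite /= scalerA exprSr Er; apply: scaleE; ring.
Qed.

Lemma eq_big_inl (T : Type) (l : seq T) (F G : T -> N) :
  (forall w, inl w l -> F w = G w) -> \sum_(w <- l) F w = \sum_(w <- l) G w.
Proof.
elim: l => [|y l IH] H; first by rewrite !big_nil.
rewrite !big_cons H; last by left.
by rewrite IH // => w hw; apply: H; right.
Qed.

Lemma psi_surj (g : (R -> Prop) -> (N * R -> Prop)) : A_sections U g ->
  exists C, is_loc_elem (powers b) C /\ psi C = g.
Proof.
move=> hg.
pose pt p := prime_ideal p /\ ~ p b.
pose Pfa p (fa : R * N) := ~ p fa.1 /\ forall q, prime_ideal q -> ~ q fa.1 ->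
     ~ q b /\ g q = frac (compl q) fa.2 fa.1.
pose fa p := epsilon (inhabits ((0 : R), (0 : N))) (Pfa p).
have Hfa : forall p, pt p -> Pfa p (fa p).
  by move=> p [pp nb]; apply: epsilon_spec; apply: datum.
pose fF p := (fa p).1.
pose aF p := (fa p).2.
have [n1 [l1 [hl1 E1]]] : exists n, gen pt fF (b ^+ n).
  apply: (rad_lemma pid (gen_ideal pt fF)) => q qq sub; apply: NNPP => nqb.
  have [nf _] := Hfa q (conj qq nqb).
  by apply: nf; apply: sub; apply: gen_mem; split.
have cover : forall q, prime_ideal q -> ~ q b -> exists z, inl z l1 /\ ~ q (fF z.2).
  move=> q qq nqb; apply: (sum_notin qq); rewrite -E1; exact: (prime_pow qq nqb).
have [Kb HK] : exists Kb, forall z z', inl z l1 -> inl z' l1 ->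
   (fF z.2 * fF z'.2) ^+ Kb *: (fF z'.2 *: aF z.2 - fF z.2 *: aF z'.2) = 0.
  apply: (uniform2 (P := fun z z' k => (fF z.2 * fF z'.2) ^+ k *:
       (fF z'.2 *: aF z.2 - fF z.2 *: aF z'.2) = 0)).
    move=> z z' k k' H le.
    by rewrite -(subnK le) exprD -scalerA H scaler0.
  move=> z z' hz hz'.
  have [nf Hz] := Hfa _ (hl1 _ hz).
  have [nf' Hz'] := Hfa _ (hl1 _ hz').
  apply: (loc_zero pid) => q qq nq.
  have nq1 : ~ q (fF z.2) by move=> h; apply: nq; exact: (idealMr _ qq.1 h).
  have nq2 : ~ q (fF z'.2) by move=> h; apply: nq; exact: (idealM _ qq.1 h).
  have [_ G1] := Hz q qq nq1.
  have [_ G2] := Hz' q qq nq2.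
  rewrite G1 in G2.
  have [t [nt ht]] := frac_inv (mult_compl qq) nq1 G2.
  by exists t.
pose fF' p := fF p ^+ Kb.+1.
pose aF' p := fF p ^+ Kb *: aF p.
have pair : forall z z', inl z l1 -> inl z' l1 -> fF' z'.2 *: aF' z.2 = fF' z.2 *: aF' z'.2.
  move=> z z' hz hz'; have := HK z z' hz hz'.
  rewrite scalerBr => /eqP; rewrite subr_eq0 => /eqP H.
  rewrite /fF' /aF' !scalerA.
  transitivity ((fF z.2 * fF z'.2) ^+ Kb *: (fF z'.2 *: aF z.2)).
    by rewrite scalerA exprMn !exprSr; apply: scaleE; ring.
  by rewrite H scalerA; apply: scaleE; rewrite exprMn !exprSr; ring.
pose pt2 p := exists z, inl z l1 /\ p = z.2.
have [n2 [l2 [hl2 E2]]] : exists n, gen pt2 fF' (b ^+ n).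
  apply: (rad_lemma pid (gen_ideal pt2 fF')) => q qq sub; apply: NNPP => nqb.
  have [z [hz nz]] := cover q qq nqb.
  apply: (prime_pow (n := Kb.+1) qq nz); apply: sub; apply: gen_mem; by exists z.
pose m := \sum_(w <- l2) w.1 *: aF' w.2.
exists (frac (powers b) m (b ^+ n2)); split.
  by exists m, (b ^+ n2); split=> //; exists n2.
apply: functional_extensionality => p.
case: (classic (pt p)) => [[pp nb]|npt]; last first.
  rewrite psi_npt //; symmetry; apply: (proj2 (hg.1 p)) => /Supp_iff; exact: npt.
rewrite psi_frac //.
have [z [hz nz]] := cover p pp nb.
have [_ Hz] := Hfa _ (hl1 _ hz).
have [_ ->] := Hz p pp nz.
have nz' : ~ p (fF' z.2) := prime_pow pp nz.
transitivity (frac (compl p) (aF' z.2) (fF' z.2)); last first.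
  apply: (frac_eq (mult_compl pp) nz' nz); apply/equivE; exists 1; split; first exact: pp.2.1.
  by rewrite /= /aF' /fF' scalerA exprS; apply: scaleE; ring.
apply: (frac_eq (mult_compl pp) (prime_pow pp nb) nz'); apply/equivE.
exists 1; split; first exact: pp.2.1.
rewrite /= !mul1r E2 scaler_suml /m scaler_sumr; apply: eq_big_inl => w hw.
have [z' [hz' Ew]] := hl2 w hw.
rewrite Ew; transitivity (w.1 *: (fF' z.2 *: aF' z'.2)).
  by rewrite scalerA [RHS]scalerA (mulrC w.1).
by rewrite -(pair z z' hz hz') scalerA.
Qed.

End Main.

Theorem corollary3p17 (R : idomainType) (M N : lmodType R) (K : M -> Prop) :
  PID R -> faithful M -> primeful M -> (exists P : M -> Prop, prime_submodule P) ->
  is_submodule K ->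
  exists a : R,
    @A_iso_loc R M N (fun P : M -> Prop => prime_submodule P /\ ~ V K P) a.
Proof.
move=> pid faith prf _ hK.
have [b hb] := pid _ (colon_ideal hK).
exists b.
pose phi (g : (R -> Prop) -> (N * R -> Prop)) :=
  epsilon (inhabits (fun _ : N * R => False))
    (fun C => is_loc_elem (powers b) C /\ psi b C = g).
have Hphi : forall g, A_sections (U K) g -> is_loc_elem (powers b) (phi g) /\ psi b (phi g) = g.
  move=> g hg; exact: (epsilon_spec _ _ (psi_surj pid faith prf hK hb hg)).
have phi_psi : forall C, is_loc_elem (powers b) C -> phi (psi b C) = C.
  move=> C hC; have [h1 h2] := Hphi _ (psi_sec faith prf hK hb hC).
  exact: (psi_inj pid h1 hC h2).
exists phi; split; [|split; [|split; [|split]]].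
- by move=> g /Hphi [].
- move=> g1 g2 h1 h2 E; have [_ <-] := Hphi _ h1; have [_ <-] := Hphi _ h2; by rewrite E.
- move=> C hC; exists (psi b C); split; [exact: (psi_sec faith prf hK hb hC) | exact: phi_psi].
- move=> g1 g2 h1 h2; have [c1 e1] := Hphi _ h1; have [c2 e2] := Hphi _ h2.
  have [hl he] := psi_add c1 c2.
  by rewrite -{1}e1 -{1}e2 -he phi_psi.
- move=> r g h; have [c e] := Hphi _ h.
  have [hl he] := psi_scale r c.
  by rewrite -{1}e -he phi_psi.
Qed.
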